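(* For all $n\geq 0$, $$s_n=\sum_{k=0}^{\lfloor n/2\rfloor}\binom{n-k}{n-2k}d_{n-2k},$$ where $s_n$ is the number of symmetric Schröder paths of length $2n$ and $d_j$ is the number of symmetric Dyck paths of length $2j$.
   Context: Steps: $U=(1,1)$, $D=(1,-1)$, $H=(2,0)$. A Dyck path of length $2n$ is a lattice path from $(0,0)$ to $(2n,0)$ with steps $U,D$ never going below the $x$-axis; a Schröder path of length $2n$ is a lattice path from $(0,0)$ to $(2n,0)$ with steps $U,D,H$ never going below the $x$-axis. A Dyck or Schröder path of length $2n$ is symmetric if it has a vertex with $x$-coordinate $n$ and it is invariant under reflection in the line $x=n$; equivalently, reversing its sequence of steps and interchanging $U$ and $D$ (keeping $H$) gives back the same sequence, and no $H$ step crosses the line $x=n$. $d_n$ = number of symmetric Dyck paths of length $2n$, $s_n$ = number of symmetric Schröder paths of length $2n$. *)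

(* Defs.v *)
From HB Require Import structures.
From mathcomp Require Import all_boot.
Set Implicit Arguments. Unset Strict Implicit. Unset Printing Implicit Defensive.

(* Steps U=(1,1), D=(1,-1), H=(2,0). *)
Inductive step := U | D | H.

Definition step_eqb (a b : step) : bool :=
  match a, b with U, U | D, D | H, H => true | _, _ => false end.
Lemma step_eqP : Equality.axiom step_eqb.
Proof. by case; case; constructor. Qed.
HB.instance Definition _ := hasDecEq.Build step step_eqP.

Definition swidth (s : step) : nat := if s is H then 2 else 1.
Definition width (p : seq step) : nat := sumn (map swidth p).

Fixpoint nonneg (h : nat) (p : seq step) : bool :=
  match p with
  | [::] => true
  | U :: q => nonneg h.+1 q
  | D :: q => (0 < h) && nonneg h.-1 q
  | H :: q => nonneg h q
  end.
Fixpoint final_height (h : nat) (p : seq step) : nat :=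
  match p with
  | [::] => h
  | U :: q => final_height h.+1 q
  | D :: q => final_height h.-1 q
  | H :: q => final_height h q
  end.

Definition schroder_path (n : nat) (p : seq step) : bool :=
  [&& width p == 2 * n, nonneg 0 p & final_height 0 p == 0].
Definition dyck_path (n : nat) (p : seq step) : bool :=
  schroder_path n p && (H \notin p).

Definition swapUD (s : step) : step :=
  match s with U => D | D => U | H => H end.

(* symmetric: has a vertex at x-coordinate n (some prefix has width n,
   so no H step crosses x = n) and reversing + swapping U/D gives p back. *)
Definition symmetric (n : nat) (p : seq step) : bool :=
  (map swapUD (rev p) == p) && has (fun k => width (take k p) == n) (iota 0 (size p).+1).

Fixpoint words (k : nat) : seq (seq step) :=
  match k with
  | 0 => [:: [::]]
  | k.+1 => flatten [seq [:: U :: w; D :: w; H :: w] | w <- words k]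
  end.

(* any path of width 2n has at most 2n steps *)
Definition all_words_upto (m : nat) : seq (seq step) :=
  flatten [seq words k | k <- iota 0 m.+1].

Definition d_num (n : nat) : nat :=
  count (fun p => dyck_path n p && symmetric n p) (all_words_upto (2 * n)).
Definition s_num (n : nat) : nat :=
  count (fun p => schroder_path n p && symmetric n p) (all_words_upto (2 * n)).

Example d_small : map d_num (iota 0 6) = [:: 1; 1; 2; 3; 6; 10]. Proof. by vm_compute. Qed.
Example s_small : map s_num (iota 0 5) = [:: 1; 1; 3; 5; 13]. Proof. by vm_compute. Qed.

(* Main.v *)
Require Import Defs.
From mathcomp Require Import all_boot zify.

Definition mirror (q : seq step) := map swapUD (rev q).
Definition dbl (q : seq step) := q ++ mirror q.

Lemma swapUDK : involutive swapUD. Proof. by case. Qed.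
Lemma mirrorK q : mirror (mirror q) = q.
Proof. by rewrite /mirror -map_rev revK (mapK swapUDK). Qed.
Lemma mirror_cat a b : mirror (a ++ b) = mirror b ++ mirror a.
Proof. by rewrite /mirror rev_cat map_cat. Qed.
Lemma mirror_cons c q : mirror (c :: q) = mirror q ++ [:: swapUD c].
Proof. by rewrite -cat1s mirror_cat. Qed.
Lemma width_cat a b : width (a ++ b) = width a + width b.
Proof. by rewrite /width map_cat sumn_cat. Qed.
Lemma width_mirror q : width (mirror q) = width q.
Proof.
elim: q => [//|c q IH]; rewrite mirror_cons width_cat IH /width /=.
by case: c => /=; rewrite addnC.
Qed.
Lemma nonneg_cat h a b : nonneg h (a ++ b) = nonneg h a && nonneg (final_height h a) b.
Proof. elim: a h => [//|c a IH] h; case: c => //=; by rewrite IH // andbA. Qed.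
Lemma fh_cat h a b : final_height h (a ++ b) = final_height (final_height h a) b.
Proof. elim: a h => [//|c a IH] h; case: c => //=. Qed.
Lemma nonneg_mirror q h : nonneg h q ->
  nonneg (final_height h q) (mirror q) && (final_height (final_height h q) (mirror q) == h).
Proof.
elim: q h => [|c q IH] h /=; first by rewrite eqxx.
rewrite mirror_cons nonneg_cat fh_cat.
case: c => /=.
- move=> /IH /andP[-> /eqP ->] /=; by rewrite eqxx.
- move=> /andP[hp /IH /andP[-> /eqP ->]] /=; apply/eqP; lia.
- move=> /IH /andP[-> /eqP ->] /=; by rewrite eqxx.
Qed.
Lemma width_size w : width w = size w + count_mem H w.
Proof. elim: w => [//|c w IH]; rewrite /width /= -/(width w) IH; case: c => /=; lia. Qed.
Lemma cat_width_inj a b c d : a ++ b = c ++ d -> width a = width c -> a = c.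
Proof.
elim: a c => [|x a IH] [|y c] //=.
- by rewrite /width /= => _; case: y => /=; lia.
- by rewrite /width /= => _; case: x => /=; lia.
- case=> -> e; rewrite /width /= => w; congr (_ :: _); apply: IH => //.
  move: w; rewrite /width; lia.
Qed.

Definition Sym n x := schroder_path n x && Defs.symmetric n x.
Definition Half n q := (width q == n) && nonneg 0 q.

Lemma dbl_sym n q : Half n q -> Sym n (dbl q).
Proof.
case/andP=> /eqP wq nq; rewrite /Sym /schroder_path /Defs.symmetric /dbl.
have /andP[n2 /eqP f2] := @nonneg_mirror q 0 nq.
rewrite width_cat width_mirror wq nonneg_cat nq n2 fh_cat f2 eqxx.
have -> : n + n == 2 * n by apply/eqP; lia.
have -> : map swapUD (rev (q ++ mirror q)) = q ++ mirror q.
  by rewrite -/(mirror _) mirror_cat mirrorK.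
rewrite eqxx; apply/hasP; exists (size q).
  by rewrite mem_iota size_cat; lia.
by rewrite take_size_cat // wq.
Qed.

Lemma sym_dbl n x : Sym n x -> exists2 q, Half n q & x = dbl q.
Proof.
case/andP=> /and3P[/eqP wx nx _] /andP[/eqP sx /hasP[k _ /eqP wk]].
set q := take k x; set r := drop k x.
have ex : x = q ++ r by rewrite cat_take_drop.
have wr : width r = n by move: wx; rewrite ex width_cat wk; lia.
have : mirror r ++ mirror q = q ++ r by rewrite -mirror_cat -ex.
move=> e; have := @cat_width_inj _ _ _ _ e; rewrite width_mirror wr wk => /(_ erefl) mr.
exists q.
  by rewrite /Half wk eqxx /=; move: nx; rewrite ex nonneg_cat => /andP[].
by rewrite ex /dbl -mr mirrorK.
Qed.

Lemma count_words k (P : pred (seq step)) : count P (words k.+1) =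
  count (fun w => P (U :: w)) (words k) + count (fun w => P (D :: w)) (words k)
  + count (fun w => P (H :: w)) (words k).
Proof.
rewrite /= count_flatten; elim: (words k) => [//|w s IH] /=; rewrite IH; lia.
Qed.

Lemma cons_count (c' : step) y (s : seq (seq step)) :
  count (fun w => pred1 y (c' :: w)) s =
  if y is c :: x then (c' == c) * count_mem x s else 0.
Proof.
elim: s => [|w s IH] /=; first by case: y => [|? ?]; rewrite ?muln0.
rewrite IH {IH}; case: y => [//|c x]; rewrite eqseq_cons.
by case: (c' == c) => /=; rewrite ?mul1n ?mul0n // eq_sym.
Qed.

Lemma count_mem_words k x : count_mem x (words k) = (size x == k).
Proof.
elim: k x => [|k IH] [|c x] //; rewrite count_words !cons_count //.
by rewrite !IH eqSS; case: (size x == k); case: c.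
Qed.

Lemma uniq_words k : uniq (words k).
Proof.
apply: count_mem_uniq => x; rewrite count_mem_words.
Abort.

Lemma mem_count (x : seq step) s : (x \in s) = (0 < count_mem x s).
Proof. by rewrite -has_pred1 has_count. Qed.

Lemma mem_words k x : (x \in words k) = (size x == k).
Proof. by rewrite mem_count count_mem_words; case: (size x == k). Qed.

Lemma uniq_words k : uniq (words k).
Proof. by apply: count_mem_uniq => x; rewrite count_mem_words mem_words. Qed.

Lemma sumn_eq (a : nat) (s : seq nat) : sumn [seq nat_of_bool (a == k) | k <- s] = count_mem a s.
Proof. by elim: s => [//|k s IH] /=; rewrite IH eq_sym. Qed.

Definition AW m := all_words_upto m.

Lemma count_mem_AW m x : count_mem x (AW m) = (size x <= m).
Proof.
rewrite /AW /all_words_upto count_flatten -map_comp.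
rewrite (eq_map (g := fun k => nat_of_bool (size x == k))); last first.
  by move=> k /=; rewrite count_mem_words.
by rewrite sumn_eq count_uniq_mem ?iota_uniq // mem_iota.
Qed.

Lemma uniq_AW m : uniq (AW m).
Proof.
apply: count_mem_uniq => x; rewrite count_mem_AW mem_count count_mem_AW.
by case: (size x <= m).
Qed.

Lemma mem_AW m x : (x \in AW m) = (size x <= m).
Proof. by rewrite mem_count count_mem_AW; case: (size x <= m). Qed.

Lemma count_AW m (P : pred (seq step)) : count P (AW m) = \sum_(0 <= k < m.+1) count P (words k).
Proof.
rewrite /AW /all_words_upto count_flatten sumnE !big_map.
by rewrite /index_iota subn0.
Qed.

Lemma count_same (P : pred (seq step)) s1 s2 : uniq s1 -> uniq s2 ->
  (forall x, P x -> (x \in s1) = (x \in s2)) -> count P s1 = count P s2.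
Proof.
move=> u1 u2 e; rewrite -!size_filter; apply: perm_size.
apply: uniq_perm; rewrite ?filter_uniq // => x; rewrite !mem_filter.
by case Px: (P x) => //=; apply: e.
Qed.

Lemma size_le_width w : size w <= width w.
Proof. rewrite width_size; lia. Qed.

Lemma dbl_inj : injective dbl.
Proof.
move=> a b e.
have sz : size a = size b.
  have := congr1 size e; rewrite /dbl !size_cat /mirror !size_map !size_rev; lia.
by have := congr1 (take (size a)) e; rewrite /dbl take_size_cat // sz take_size_cat.
Qed.

Lemma count_sym n (R : pred (seq step)) :
  count (fun x => Sym n x && R x) (AW (2 * n)) = count (fun q => Half n q && R (dbl q)) (AW n).
Proof.
rewrite -!size_filter -[RHS](size_map dbl); apply: perm_size.
apply: uniq_perm; rewrite ?filter_uniq ?map_inj_uniq ?filter_uniq ?uniq_AW //; first exact: dbl_inj.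
move=> x; rewrite mem_filter mem_AW; apply/andP/mapP.
- case=> /andP[/sym_dbl[q hq ->] Rx] _; exists q => //.
  by rewrite mem_filter mem_AW hq Rx /=; case/andP: hq => /eqP <- _; apply: size_le_width.
- case=> q; rewrite mem_filter => /andP[/andP[hq Rq] _] ->; split; first by rewrite dbl_sym.
  have /andP[/and3P[/eqP w _ _] _] := @dbl_sym n q hq.
  by rewrite -w size_le_width.
Qed.

Definition fH (w : seq step) := filter (fun s => s != H) w.
Definition A L k (P : pred (seq step)) :=
  count (fun w => (count_mem H w == k) && P (fH w)) (words L).
Definition B m (P : pred (seq step)) := count (fun w => (H \notin w) && P w) (words m).

Lemma B_rec m P : B m.+1 P = B m (fun w => P (U :: w)) + B m (fun w => P (D :: w)).
Proof.
rewrite /B count_words -[RHS]addn0; congr (_ + _ + _).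
by rewrite (eq_count (a2 := pred0)) ?count_pred0 // => w; rewrite in_cons eqxx.
Qed.

Lemma A0 L P : A L 0 P = B L P.
Proof.
elim: L P => [|L IH] P; first by [].
rewrite /A count_words B_rec -[RHS]addn0 -!IH; congr (_ + _ + _).
by rewrite (eq_count (a2 := pred0)) ?count_pred0 // => w /=.
Qed.

Lemma A_rec L k P : A L.+1 k.+1 P =
  A L k.+1 (fun w => P (U :: w)) + A L k.+1 (fun w => P (D :: w)) + A L k P.
Proof. by rewrite /A count_words. Qed.

Lemma A_formula L k P : A L k P = 'C(L, k) * B (L - k) P.
Proof.
elim: L k P => [|L IH] [|k] P.
- by rewrite A0 bin0 subn0 mul1n.
- by rewrite /A /= bin_small.
- by rewrite A0 bin0 subn0 mul1n.
rewrite A_rec !IH binS subSS.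
case: (ltnP k L) => kL.
- have -> : L - k = (L - k.+1).+1 by lia.
  rewrite B_rec; lia.
- rewrite bin_small; last by lia.
  by rewrite !mul0n.
Qed.

Lemma nonneg_fH h w : nonneg h w = nonneg h (fH w).
Proof. elim: w h => [//|c w IH] h; case: c => /=; rewrite ?IH //. Qed.

Lemma mem_mirror q : (H \in mirror q) = (H \in q).
Proof.
elim: q => [//|c q IH]; rewrite mirror_cons mem_cat IH !in_cons.
by case: c; rewrite /= ?orbF ?orbT // orbC.
Qed.

Lemma d_B m : d_num m = B m (nonneg 0).
Proof.
rewrite /d_num (eq_count (a2 := fun x => Sym m x && (H \notin x))); last first.
  by move=> x; rewrite /dyck_path /Sym; case: (H \in x); rewrite /= ?andbT ?andbF.
rewrite -/(AW _) count_sym.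
rewrite (@count_same _ _ (words m)) ?uniq_AW ?uniq_words //; last first.
  move=> q /andP[/andP[/eqP w _]]; rewrite /dbl mem_cat mem_mirror orbb => nH.
  rewrite mem_AW mem_words; move: w; rewrite width_size.
  by move/count_memPn: nH => ->; rewrite addn0 => ->; rewrite leqnn eqxx.
apply: eq_in_count => q; rewrite mem_words => /eqP sq.
rewrite /Half /dbl mem_cat mem_mirror orbb width_size.
case nH : (H \in q) => /=; first by rewrite andbF.
by move/negbT/count_memPn: nH => ->; rewrite sq addn0 eqxx andbT.
Qed.

Lemma s_sum n : s_num n = \sum_(0 <= L < n.+1) 'C(L, n - L) * d_num (L - (n - L)).
Proof.
rewrite /s_num (eq_count (a2 := fun x => Sym n x && true)); last by move=> x; rewrite andbT.
rewrite -/(AW _) count_sym count_AW; apply: eq_big_nat => L /andP[_ hL].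
rewrite d_B -A_formula; apply: eq_in_count => w; rewrite mem_words => /eqP sw.
rewrite andbT /Half width_size sw -nonneg_fH; congr (_ && _).
apply/eqP/eqP; lia.
Qed.

Theorem theorem3p3 (n : nat) :
  s_num n = \sum_(0 <= k < (n./2).+1) 'C(n - k, n - 2 * k) * d_num (n - 2 * k).
Proof.
rewrite s_sum big_nat_rev (@big_cat_nat _ _ _ (n./2).+1) /=; last 2 first.
- by [].
- lia.
rewrite [X in _ + X]big_nat_cond [X in _ + X]big1 ?addn0; last first.
  move=> k; rewrite andbT => /andP[h1 h2]; rewrite bin_small ?mul0n //; lia.
apply: eq_big_nat => k /andP[_ hk].
have e1 : n - (0 + n.+1 - k.+1) = k by lia.
have e2 : 0 + n.+1 - k.+1 - k = n - 2 * k by lia.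
rewrite e1 e2 -(@bin_sub (0 + n.+1 - k.+1) k); last by lia.
by rewrite e2.
Qed.
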